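(* Let $0\le a<b$ and $d\in\mathbb{R}$. Let $g$ be a complex-valued $C^1$ function on $[a,b]$ and $I$ a real-valued $C^2$ function on $[a,b]$ such that for some $\alpha>0$ the Lebesgue measure of $\{x\in[a,b]:I'(x)\in2\pi\mathbb{Z}+[-\delta,\delta]\}$ is $\mathcal{O}(\delta^\alpha)$ as $\delta\to0^+$. Let $f:\mathbb{Z}_{\ge0}\to\mathbb{C}$ satisfy $f(\lfloor tN\rfloor)=e^{iNI(t)}g(t)N^d+o(N^d)$ as $N\to\infty$ for each $t>0$, uniformly on $[a,b]$, i.e. \[ \sup_{t\in[a,b]}\frac{\big|f(\lfloor tN\rfloor)-e^{iNI(t)}g(t)N^d\big|}{N^d}\to0\quad(N\to\infty). \] Then, as $N\to\infty$, $\displaystyle\sum_{x=\lfloor aN\rfloor+1}^{\lfloor bN\rfloor}f(x)=o(N^{d+1})$. *)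

(* Defs.v *)
From HB Require Import structures.
From mathcomp Require Import all_boot all_order all_algebra.
From mathcomp Require Import all_classical all_reals all_analysis.
From mathcomp Require Import complex.

Set Implicit Arguments.
Unset Strict Implicit.
Unset Printing Implicit Defensive.

Import Order.TTheory GRing.Theory Num.Theory.
Import numFieldNormedType.Exports.
Local Open Scope classical_set_scope.
Local Open Scope ring_scope.

(* h : R -> R is C^1 on the closed interval [a,b]: h is continuous on [a,b],
   differentiable on ]a,b[, and its derivative extends to a continuous
   function on [a,b] (equivalently: one-sided derivatives at the endpoints and
   continuous derivative on [a,b]). *)
Definition C1_on {R : realType} (a b : R) (h : R -> R) : Prop :=
  {within `[a, b], continuous h} /\
  {in `]a, b[, forall x, derivable h x 1} /\
  exists dh : R -> R,
    {within `[a, b], continuous dh} /\ {in `]a, b[, forall x, dh x = derive1 h x}.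

Definition C2_on {R : realType} (a b : R) (h : R -> R) : Prop :=
  C1_on a b h /\
  exists dh : R -> R, {in `]a, b[, forall x, dh x = derive1 h x} /\ C1_on a b dh.

Definition C1_on_cplx {R : realType} (a b : R) (g : R -> R[i]) : Prop :=
  C1_on a b (fun x => complex.Re (g x)) /\ C1_on a b (fun x => complex.Im (g x)).

Definition expi {R : realType} (x : R) : R[i] := Complex (cos x) (sin x).

Definition near_2piZ_set {R : realType} (a b : R) (I : R -> R) (delta : R)
  : set R :=
  [set x | x \in `[a, b] /\
           exists k : int, `|derive1 I x - 2 * pi * k%:~R| <= delta].

Definition cabs {R : realType} (z : R[i]) : R :=
  Num.sqrt (complex.Re z ^+ 2 + complex.Im z ^+ 2).

(* Main.v *)
Require Import Defs.
From HB Require Import structures.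
From mathcomp Require Import all_boot all_order all_algebra.
From mathcomp Require Import all_classical all_reals all_analysis.
From mathcomp Require Import complex.
From mathcomp Require Import ring lra zify.
Import Order.TTheory GRing.Theory Num.Theory.
Import numFieldNormedType.Exports.
Local Open Scope classical_set_scope.
Local Open Scope ring_scope.


Section CabsLemmas.
Context {R : realType}.
Implicit Types x y z : R[i].

Lemma cabsE z : `|z| = (cabs z)%:C%C.
Proof. by rewrite normc_def. Qed.

Lemma cabs_ge0 z : 0 <= cabs z.
Proof. by rewrite /cabs sqrtr_ge0. Qed.

Lemma cabsD x y : cabs (x + y) <= cabs x + cabs y.
Proof. by rewrite -lecR rmorphD /= -!cabsE ler_normD. Qed.

Lemma cabsM x y : cabs (x * y) = cabs x * cabs y.
Proof. by apply: complexI; rewrite rmorphM /= -!cabsE normrM. Qed.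

Lemma cabsN x : cabs (- x) = cabs x.
Proof. by apply: complexI; rewrite -!cabsE normrN. Qed.

Lemma cabsB x y : cabs (x - y) = cabs (y - x).
Proof. by rewrite -cabsN opprB. Qed.

Lemma cabsV x : cabs (x^-1) = (cabs x)^-1.
Proof. by apply: complexI; rewrite fmorphV /= -!cabsE normfV. Qed.

Lemma cabsR (r : R) : cabs (r%:C)%C = `|r|.
Proof. by rewrite /cabs /= expr0n /= addr0 sqrtr_sqr. Qed.

Lemma cabs_sum (I : Type) (s : seq I) (P : pred I) (F : I -> R[i]) :
  cabs (\sum_(i <- s | P i) F i) <= \sum_(i <- s | P i) cabs (F i).
Proof.
elim/big_rec2: _ => [|i y1 y2 _ H]; first by rewrite /cabs /= expr0n /= addr0 sqrtr0.
by apply: le_trans (cabsD _ _) _; rewrite lerD2l.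
Qed.

End CabsLemmas.


Section Expi.
Context {R : realType}.
Implicit Types x y : R.

Lemma expiD x y : expi (x + y) = expi x * expi y.
Proof.
rewrite /expi cosD sinD.
apply/eqP; rewrite eq_complex /=; apply/andP; split; apply/eqP; ring.
Qed.

Lemma cabs_expi x : cabs (expi x) = 1.
Proof. by rewrite /cabs /expi /= cos2Dsin2 sqrtr1. Qed.

Lemma lip1 (h dh : R -> R) :
  (forall x, is_derive x 1 h (dh x)) -> (forall x, `|dh x| <= 1) ->
  forall x y, `|h x - h y| <= `|x - y|.
Proof.
move=> Hd Hb.
have key : forall x y, x < y -> `|h y - h x| <= `|y - x|.
  move=> x y xy.
  have hc : continuous h.
    by move=> z; apply: differentiable_continuous; apply/derivable1_diffP; exact: ex_derive.
  have [c _ ->] := MVT xy (fun z _ => Hd z) (continuous_subspaceT hc).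
  by rewrite normrM ler_piMl // Hb.
move=> x y; case: (ltgtP x y) => [xy|yx|->]; last by rewrite !subrr normr0.
  by rewrite distrC [`|x - y|]distrC key.
exact: key.
Qed.


Lemma cabs_ReIm (z : R[i]) : cabs z <= `|complex.Re z| + `|complex.Im z|.
Proof.
rewrite /cabs -(@ger0_norm _ (`|complex.Re z| + `|complex.Im z|)) ?addr_ge0 //.
rewrite -sqrtr_sqr; apply: ler_wsqrtr.
have hp : complex.Re z ^+ 2 = `|complex.Re z| ^+ 2 by rewrite real_normK ?num_real.
have hq : complex.Im z ^+ 2 = `|complex.Im z| ^+ 2 by rewrite real_normK ?num_real.
rewrite hp hq; have := normr_ge0 (complex.Re z); have := normr_ge0 (complex.Im z).
nra.
Qed.

Lemma cos_lip x y : `|cos x - cos y| <= `|x - y|.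
Proof. by apply: (@lip1 cos (fun z => - sin z)) => z; rewrite normrN sin_max. Qed.

Lemma sin_lip x y : `|sin x - sin y| <= `|x - y|.
Proof. by apply: (@lip1 sin cos) => z; exact: cos_max. Qed.

Lemma cabs_expiB x y : cabs (expi x - expi y) <= 2 * `|x - y|.
Proof.
apply: le_trans (cabs_ReIm _) _; rewrite /expi /=.
by rewrite mulr2n mulrDl mul1r lerD // ?cos_lip ?sin_lip.
Qed.

Lemma cos2pik (k : int) : cos (2 * pi * k%:~R) = 1 :> R /\ sin (2 * pi * k%:~R) = 0 :> R.
Proof.
have H (n : nat) : cos (2 * pi * n%:R) = 1 :> R /\ sin (2 * pi * n%:R) = 0 :> R.
  have e : 2 * pi * n%:R = 0 + (pi *+ 2) *+ n :> R by rewrite add0r mulr_natr mulr_natl.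
  by rewrite e (periodicn (@cosD2pi R)) (periodicn (@sinD2pi R)) cos0 sin0.
case: k => n; first exact: H.
rewrite NegzE mulrNz mulrN cosN sinN.
have [-> ->] := H n.+1; by rewrite oppr0.
Qed.

Lemma cos_far (delta th : R) : 0 < delta <= pi ->
  ~ (exists k : int, `|th - 2 * pi * k%:~R| <= delta) -> cos th <= cos delta.
Proof.
move=> /andP[d0 dpi] nk.
have pi0 := pi_gt0 R.
have p2 : 0 < 2 * (pi : R) by apply: mulr_gt0.
set u := (th + pi) / (2 * pi).
set k := Num.floor u.
have kl := Num.Theory.floor_le u.
have ku := Num.Theory.floorD1_gt u.
rewrite -/k intrD in ku.
have e : 2 * pi * u = th + pi by rewrite /u mulrC divfK ?gt_eqF.
have h1 : 2 * pi * k%:~R <= 2 * pi * u by rewrite ler_pM2l.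
have h2 : 2 * pi * u < 2 * pi * k%:~R + 2 * pi.
  by rewrite -[X in _ < _ + X]mulr1 -mulrDr ltr_pM2l.
rewrite e in h2; rewrite e in h1.
set t := th - 2 * pi * k%:~R.
have ct : cos th = cos t.
  by rewrite /t cosB; have [-> ->] := cos2pik k; rewrite mulr1 mulr0 addr0.
have t1 : - pi <= t by rewrite /t; lra.
have t2 : t <= pi by rewrite /t; lra.
have tn : delta < `|t|.
  rewrite ltNge; apply/negP => H; apply: nk; by exists k.
rewrite ct -cos_norm.
have := @ltr_cos R delta `|t|.
rewrite !in_itv /= (ltW d0) dpi /= normr_ge0 /= => /(_ isT).
have : `|t| <= pi by rewrite ler_norml t1 t2.
move=> -> /(_ isT) H; by rewrite ltW // H.
Qed.

End Expi.


Section Lip.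
Context {R : realType}.

Lemma expi_sub1 (th : R) : cabs (expi th - 1) = Num.sqrt (2 - 2 * cos th).
Proof.
rewrite /cabs /expi /=; congr Num.sqrt.
have := cos2Dsin2 th; rewrite oppr0 addr0; lra.
Qed.

Lemma kappa_gt0 (delta : R) : 0 < delta <= pi -> 0 < Num.sqrt (2 - 2 * cos delta).
Proof.
move=> /andP[d0 dpi]; rewrite sqrtr_gt0.
have := @ltr_cos R 0 delta; rewrite !in_itv /= lexx (ltW d0) dpi pi_ge0 /= => /(_ isT isT).
rewrite d0 cos0 => H; lra.
Qed.

Lemma expi_far (delta th : R) : 0 < delta <= pi ->
  ~ (exists k : int, `|th - 2 * pi * k%:~R| <= delta) ->
  Num.sqrt (2 - 2 * cos delta) <= cabs (expi th - 1).
Proof.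
move=> dp nk; rewrite expi_sub1; apply: ler_wsqrtr.
have := cos_far _ _ dp nk; lra.
Qed.

Lemma C1_lip (a b : R) (h : R -> R) : a <= b -> C1_on a b h ->
  exists L : R, 0 <= L /\ forall s t, s \in `[a, b] -> t \in `[a, b] ->
    `|h s - h t| <= L * `|s - t|.
Proof.
move=> ab [hc [hd [dh [dhc dhE]]]].
have [cM cMab HM] := EVT_max ab dhc.
have [cm cmab Hm] := EVT_min ab dhc.
exists (`|dh cM| + `|dh cm|); split; first by rewrite addr_ge0.
have key : forall s t, s \in `[a, b] -> t \in `[a, b] -> s < t ->
    `|h t - h s| <= (`|dh cM| + `|dh cm|) * `|t - s|.
  move=> s t sab tab st.
  have sub : `[s, t] `<=` `[a, b].
    move=> z /=; rewrite !in_itv /=; move: sab tab; rewrite !in_itv /=.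
    move=> /andP[? ?] /andP[? ?] /andP[? ?]; apply/andP; split; lra.
  have der : forall z, z \in `]s, t[ -> is_derive z 1 h (dh z).
    move=> z zst.
    have zab : z \in `]a, b[.
      move: zst sab tab; rewrite !in_itv /= => /andP[? ?] /andP[? ?] /andP[? ?].
      apply/andP; split; lra.
    rewrite dhE // derive1E; exact: derivableP (hd _ zab).
  have [c cst ->] := MVT st der (continuous_subspaceW sub hc).
  rewrite normrM ler_wpM2r //.
  have cab : c \in `[a, b].
    move: cst sab tab; rewrite !in_itv /= => /andP[? ?] /andP[? ?] /andP[? ?].
    apply/andP; split; lra.
  have := HM _ cab; have := Hm _ cab.
  have := ler_norm (dh cM); have := normr_ge0 (dh cm); have := normr_ge0 (dh cM).
  have : - `|dh cm| <= dh cm by rewrite lerNl; have := ler_norm (- dh cm); rewrite normrN.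
  move=> *; rewrite ler_norml; apply/andP; split; lra.
move=> s t sab tab; case: (ltgtP s t) => [st|ts|->]; last by rewrite !subrr normr0 mulr0.
  by rewrite distrC [`|s - t|]distrC key.
exact: key.
Qed.

End Lip.


Section SBP.
Context {R : realType}.

Lemma sbp (v cc q : nat -> R[i]) (m k : nat) (D : R) :
  (forall x, (m <= x < m + k)%N -> v x * cc x = v x.+1 * q x - v x * q x) ->
  (forall x, (m <= x < m + k)%N -> cabs (v x.+1 * (q x.+1 - q x)) <= D) ->
  cabs (\sum_(m <= x < m + k) v x * cc x - (v (m + k)%N * q (m + k)%N - v m * q m))
    <= k%:R * D.
Proof.
move=> Hid HD; elim: k Hid HD => [|k IH] Hid HD.
  by rewrite addn0 big_geq // sub0r subrr oppr0 /cabs /= expr0n /= addr0 sqrtr0 mul0r.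
rewrite addnS big_nat_recr /=; last by rewrite leq_addr.
have e : \sum_(m <= i < m + k) v i * cc i + v (m + k)%N * cc (m + k)%N -
   (v (m + k).+1 * q (m + k).+1 - v m * q m) =
   (\sum_(m <= i < m + k) v i * cc i - (v (m + k)%N * q (m + k)%N - v m * q m))
   - v (m + k).+1 * (q (m + k).+1 - q (m + k)%N).
  rewrite Hid; last by rewrite leq_addr /= addnS ltnS leqnn.
  ring.
rewrite e; apply: le_trans (cabsD _ _) _; rewrite cabsN.
rewrite -nat1r mulrDl mul1r addrC lerD //.
  apply: HD; by rewrite leq_addr /= addnS ltnS leqnn.
apply: IH => x /andP[h1 h2]; [apply: Hid|apply: HD];
  by rewrite h1 /= addnS ltnS ltnW.
Qed.

Lemma cabs0 : cabs (0 : R[i]) = 0.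
Proof. by rewrite /cabs /= expr0n /= addr0 sqrtr0. Qed.

Lemma cellb (v cc q : nat -> R[i]) (m n : nat) (D Q C : R) :
  (forall x, (m <= x)%N -> (x.+1 < n)%N -> v x * cc x = v x.+1 * q x - v x * q x) ->
  (forall x, (m <= x)%N -> (x.+1 < n)%N -> cabs (v x.+1 * (q x.+1 - q x)) <= D) ->
  (forall x, (m <= x)%N -> (x < n)%N -> cabs (v x * q x) <= Q) ->
  (forall x, (m <= x)%N -> (x <= n)%N -> cabs (v x * cc x) <= C) ->
  0 <= D -> 0 <= Q -> 0 <= C ->
  cabs (\sum_(m <= x < n.+1) v x * cc x) <= (n.+1 - m)%:R * D + 2 * Q + 2 * C.
Proof.
move=> Hid HD HQ HC D0 Q0 C0.
have [nm|mn] := ltnP n m.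
  rewrite big_geq // cabs0; apply: addr_ge0; [apply: addr_ge0|];
  by rewrite ?mulr_ge0.
have [e|mn'] := eqVneq n m.
  rewrite e big_nat1; apply: le_trans (HC _ _ _) _ => //.
  have := mulr_ge0 (ler0n R (m.+1 - m)) D0; lra.
have m1n : (m < n)%N by rewrite ltn_neqAle eq_sym mn' mn.
set k := (n.-1 - m)%N.
have ek : (m + k = n.-1)%N by rewrite /k subnKC // -ltnS prednK // (leq_ltn_trans _ m1n).
have en : n = (m + k).+1 by rewrite ek prednK // (leq_ltn_trans _ m1n).
rewrite en big_nat_recr /=; last by rewrite ltnW // ltnS leq_addr.
rewrite big_nat_recr /=; last by rewrite leq_addr.
have H1 : cabs (\sum_(m <= x < m + k) v x * cc x - (v (m + k)%N * q (m + k)%N - v m * q m)) <= k%:R * D.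
  apply: sbp => x /andP[h1 h2]; [apply: Hid|apply: HD] => //; by rewrite en ltnS.
set S := \sum_(m <= x < m + k) v x * cc x.
have -> : S + v (m + k)%N * cc (m + k)%N + v (m + k).+1 * cc (m + k).+1 =
   (S - (v (m + k)%N * q (m + k)%N - v m * q m)) + v (m + k)%N * q (m + k)%N - v m * q m
   + v (m + k)%N * cc (m + k)%N + v (m + k).+1 * cc (m + k).+1 by ring.
have c1 : cabs (v (m + k)%N * q (m + k)%N) <= Q by apply: HQ; rewrite ?leq_addr // en.
have c2 : cabs (v m * q m) <= Q by apply: HQ; rewrite ?leqnn // en ltnS leq_addr.
have c3 : cabs (v (m + k)%N * cc (m + k)%N) <= C by apply: HC; rewrite ?leq_addr // en.
have c4 : cabs (v (m + k).+1 * cc (m + k).+1) <= C by apply: HC; rewrite ?en // leqW ?leq_addr.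
have kk : (k%:R : R) * D <= ((m + k).+2 - m)%:R * D.
  by apply: ler_wpM2r => //; rewrite ler_nat; lia.
set X := S - _.
have := cabsD (X + v (m + k)%N * q (m + k)%N - v m * q m + v (m + k)%N * cc (m + k)%N)
           (v (m + k).+1 * cc (m + k).+1).
have := cabsD (X + v (m + k)%N * q (m + k)%N - v m * q m) (v (m + k)%N * cc (m + k)%N).
have := cabsD (X + v (m + k)%N * q (m + k)%N) (- (v m * q m)).
have := cabsD X (v (m + k)%N * q (m + k)%N).
rewrite cabsN.
move: H1 c1 c2 c3 c4 kk; rewrite -/X; lra.
Qed.

End SBP.


Section Cell.
Context {R : realType}.

Lemma cabs_mul_le (x y : R[i]) (A B : R) : cabs x <= A -> cabs y <= B ->
  cabs (x * y) <= A * B.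
Proof. by move=> hx hy; rewrite cabsM ler_pM // cabs_ge0. Qed.

Lemma cabs_inv_le (z : R[i]) (k : R) : 0 < k -> k <= cabs z -> cabs (z^-1) <= k^-1.
Proof.
move=> k0 kz; rewrite cabsV lef_pV2 // posrE; exact: lt_le_trans kz.
Qed.

Lemma tN_range (c c' : R) (N x : nat) : (0 < N)%N -> 0 <= c -> 0 <= c' ->
  ((Num.truncn (c * N%:R)).+1 <= x)%N -> (x <= Num.truncn (c' * N%:R))%N ->
  c < x%:R / N%:R /\ x%:R / N%:R <= c'.
Proof.
move=> N0 c0 c'0 h1 h2.
have N0' : 0 < (N%:R : R) by rewrite ltr0n.
split.
  rewrite ltr_pdivlMr //; apply: lt_le_trans (truncnS_gt _) _.
  by rewrite ler_nat.
rewrite ler_pdivrMr //; apply: le_trans (_ : (Num.truncn (c' * N%:R))%:R <= _).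
  by rewrite ler_nat.
by rewrite truncn_le mulr_ge0.
Qed.

Lemma tN_step (N x : nat) : (0 < N)%N -> x.+1%:R / N%:R - x%:R / N%:R = (N%:R : R)^-1.
Proof.
move=> N0; have N0' : (N%:R : R) != 0 by rewrite pnatr_eq0 -lt0n.
by rewrite -mulrBl -natrB // subSnn mul1r.
Qed.


Lemma good_cell (a b c c' : R) (I J : R -> R) (g : R -> R[i]) (LJ Lg G kap : R) (N : nat) :
  (0 < N)%N -> 0 <= a -> a <= c -> c <= c' -> c' <= b ->
  0 < kap -> 0 <= LJ -> 0 <= Lg -> 0 <= G ->
  4 * LJ <= kap * N%:R ->
  (forall s t, s \in `[a, b] -> t \in `[a, b] -> `|J s - J t| <= LJ * `|s - t|) ->
  (forall s t, s \in `[a, b] -> t \in `[a, b] -> s < t ->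
     exists2 xi, xi \in `[s, t] & I t - I s = J xi * (t - s)) ->
  (forall s t, s \in `[a, b] -> t \in `[a, b] -> cabs (g s - g t) <= Lg * `|s - t|) ->
  (forall t, t \in `[a, b] -> cabs (g t) <= G) ->
  (forall t, c <= t <= c' -> kap <= cabs (expi (J t) - 1)) ->
  cabs (\sum_(Num.truncn (c * N%:R) + 1 <= x < Num.truncn (c' * N%:R) + 1)
          expi (N%:R * I (x%:R / N%:R)) * g (x%:R / N%:R))
  <= (Num.truncn (c' * N%:R) + 1 - (Num.truncn (c * N%:R) + 1))%:R *
       ((Lg * (2 / kap) + G * (6 * LJ) * ((2 / kap) * (2 / kap))) / N%:R)
     + 2 * (G * (2 / kap)) + 2 * G.
Proof.
move=> N0 a0 ac cc' c'b k0 LJ0 Lg0 G0 hN hJ hI hg hG hgood.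
have N0' : 0 < (N%:R : R) by rewrite ltr0n.
have NN0 : (N%:R : R) != 0 by rewrite gt_eqF.
rewrite !addn1.
set m := (Num.truncn (c * N%:R)).+1.
set n := Num.truncn (c' * N%:R).
pose tN (x : nat) : R := x%:R / N%:R.
pose v x := expi (N%:R * I (tN x)).
pose cc x := g (tN x).
pose De x := N%:R * (I (tN x.+1) - I (tN x)).
pose q x := cc x * (expi (De x) - 1)^-1.
have -> : \sum_(m <= x < n.+1) expi (N%:R * I (x%:R / N%:R)) * g (x%:R / N%:R)
   = \sum_(m <= x < n.+1) v x * cc x by [].
have c0 : 0 <= c by apply: le_trans ac.
have c'0 : 0 <= c' by apply: le_trans cc'.
have hr : forall x, (m <= x)%N -> (x <= n)%N -> c <= tN x <= c' /\ tN x \in `[a, b].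
  move=> x h1 h2.
  have := tN_range c c' N x N0 c0 c'0 h1 h2; case=> l1 l2.
  split; first by rewrite (ltW l1) l2.
  rewrite /tN in_itv /=; apply/andP; split; lra.
have step : forall x, tN x.+1 - tN x = (N%:R)^-1 by move=> x; exact: tN_step.
have Ninv0 : 0 < (N%:R : R)^-1 by rewrite invr_gt0.
have LJN : LJ / N%:R <= kap / 4.
  rewrite ler_pdivrMr // mulrAC; lra.
have hA : forall x, (m <= x)%N -> (x.+1 <= n)%N -> `|De x - J (tN x)| <= LJ / N%:R.
  move=> x h1 h2.
  have [_ t0] := hr x h1 (ltnW h2).
  have [_ t1] := hr x.+1 (leqW h1) h2.
  have lt01 : tN x < tN x.+1 by rewrite -subr_gt0 step.
  have [xi xir e] := hI _ _ t0 t1 lt01.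
  have xiab : xi \in `[a, b].
    move: xir t0 t1; rewrite !in_itv /= => /andP[? ?] /andP[? ?] /andP[? ?].
    apply/andP; split; lra.
  have -> : De x = J xi by rewrite /De e step mulrCA divff // mulr1.
  apply: le_trans (hJ _ _ xiab t0) _; rewrite ler_wpM2l //.
  move: xir; rewrite in_itv /= => /andP[? ?].
  rewrite ger0_norm ?subr_ge0 // -(step x); lra.
have hB : forall x, (m <= x)%N -> (x.+1 <= n)%N -> kap / 2 <= cabs (expi (De x) - 1).
  move=> x h1 h2.
  have [tr _] := hr x h1 (ltnW h2).
  have k1 := hgood _ tr.
  have e : expi (J (tN x)) - 1 = (expi (J (tN x)) - expi (De x)) + (expi (De x) - 1) by ring.
  rewrite e in k1; have k2 := le_trans k1 (cabsD _ _).
  have k3 := cabs_expiB (J (tN x)) (De x).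
  have k4 := hA x h1 h2; rewrite distrC in k4.
  lra.
have hE0 : forall x, (m <= x)%N -> (x.+1 <= n)%N -> expi (De x) - 1 != 0.
  move=> x h1 h2; apply/eqP => E; have := hB x h1 h2; rewrite E cabs0; lra.
have hw : forall x, (m <= x)%N -> (x.+1 <= n)%N -> cabs ((expi (De x) - 1)^-1) <= 2 / kap.
  move=> x h1 h2; rewrite -[2 / kap]invf_div; apply: cabs_inv_le (hB x h1 h2).
  by rewrite divr_gt0.
have hv : forall x, v x.+1 = v x * expi (De x).
  by move=> x; rewrite /v -expiD; congr expi; rewrite /De; ring.
have hcv : forall x, cabs (v x) = 1 by move=> x; exact: cabs_expi.
have hcc : forall x, (m <= x)%N -> (x <= n)%N -> cabs (cc x) <= G.
  by move=> x h1 h2; have [_ t0] := hr x h1 h2; exact: hG.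
have D00 : 0 <= (Lg * (2 / kap) + G * (6 * LJ) * ((2 / kap) * (2 / kap))) / N%:R.
  have k2 : 0 <= 2 / kap by rewrite divr_ge0 // ltW.
  apply: divr_ge0; last exact: ltW.
  apply: addr_ge0; apply: mulr_ge0 => //; [apply: mulr_ge0 => //|apply: mulr_ge0 => //].
  by apply: mulr_ge0.
apply: (cellb v cc q) => //.
- move=> x h1 h2; rewrite hv /q; field; exact: hE0 x h1 (ltnW h2).
- move=> x h1 h2; rewrite cabsM hcv mul1r.
  have E0 := hE0 x h1 (ltnW h2).
  have E1 := hE0 x.+1 (leqW h1) h2.
  have -> : q x.+1 - q x = (cc x.+1 - cc x) * (expi (De x.+1) - 1)^-1
     + cc x * ((expi (De x) - expi (De x.+1)) *
               ((expi (De x.+1) - 1)^-1 * (expi (De x) - 1)^-1)).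
    by rewrite /q; field; rewrite E0 E1.
  have [_ t0] := hr x h1 (ltnW (ltnW h2)).
  have [_ t1] := hr x.+1 (leqW h1) (ltnW h2).
  have k2 : 0 <= 2 / kap by rewrite divr_ge0 // ltW.
  have b1 : cabs ((cc x.+1 - cc x) * (expi (De x.+1) - 1)^-1) <= (Lg / N%:R) * (2 / kap).
    apply: cabs_mul_le; last exact: hw x.+1 (leqW h1) h2.
    apply: le_trans (hg _ _ t1 t0) _; rewrite step ger0_norm //; exact: ltW.
  have nD : `|De x - De x.+1| <= 3 * (LJ / N%:R).
    have e : De x - De x.+1 = (De x - J (tN x)) + (J (tN x) - J (tN x.+1)) + (J (tN x.+1) - De x.+1) by ring.
    rewrite e; apply: le_trans (ler_normD _ _) _; apply: le_trans (lerD (ler_normD _ _) (lexx _)) _.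
    have n1 := hA x h1 (ltnW h2).
    have n3 := hA x.+1 (leqW h1) h2; rewrite distrC in n3.
    have n2 := hJ _ _ t0 t1; rewrite [`|tN x - _|]distrC step (ger0_norm (ltW Ninv0)) in n2.
    lra.
  have b2 : cabs (cc x * ((expi (De x) - expi (De x.+1)) *
               ((expi (De x.+1) - 1)^-1 * (expi (De x) - 1)^-1)))
       <= G * ((2 * (3 * (LJ / N%:R))) * ((2 / kap) * (2 / kap))).
    apply: cabs_mul_le; first exact: hcc x h1 (ltnW (ltnW h2)).
    apply: cabs_mul_le.
      apply: le_trans (cabs_expiB _ _) _; rewrite ler_pM2l //.
    apply: cabs_mul_le; [exact: hw x.+1 (leqW h1) h2|exact: hw x h1 (ltnW h2)].
  apply: le_trans (cabsD _ _) _; apply: le_trans (lerD b1 b2) _.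
  rewrite le_eqVlt; apply/orP; left; apply/eqP; field; by rewrite ?NN0 ?(lt0r_neq0 k0).
- move=> x h1 h2; rewrite cabsM hcv mul1r /q; apply: cabs_mul_le.
    exact: hcc x h1 (ltnW h2).
  exact: hw x h1 h2.
- by move=> x h1 h2; rewrite cabsM hcv mul1r; exact: hcc.
- by rewrite mulr_ge0 // divr_ge0 // ltW.
Qed.

End Cell.

Section Meas.
Context {R : realType}.

Lemma le_lebesgue (A B : set R) : A `<=` B -> (lebesgue_measure A <= lebesgue_measure B)%E.
Proof.
move=> AB.
rewrite /lebesgue_measure /lebesgue_stieltjes_measure /measure_extension.
exact: le_outer_measure.
Qed.

Definition cell (a h : R) (j : nat) : set R := `](a + j%:R * h), (a + j.+1%:R * h)[%classic.

Lemma bad_measure (a h : R) (M : nat) (P : {pred 'I_M}) (S : set R) :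
  0 < h -> (forall j : 'I_M, P j -> cell a h j `<=` S) ->
  ((\sum_(j < M | P j) h)%:E <= lebesgue_measure S)%E.
Proof.
move=> h0 HS.
have sub : \big[setU/set0]_(j < M | P j) cell a h j `<=` S.
  move=> x; rewrite -bigcup_seq_cond => -[j /= /andP[_ Pj] cx]; exact: HS Pj _ cx.
have LL := le_lebesgue _ _ sub.
apply: (le_trans _ LL).
rewrite measure_bigsetU_ord_cond.
- rewrite -sumEFin; apply: lee_sum => j _.
  change (h%:E <= lebesgue_measure (cell a h j))%E.
  rewrite /cell lebesgue_measure_itv /= lte_fin ltrD2l ltr_pM2r // ltr_nat ltnSn.
  rewrite -EFinB lee_fin -nat1r mulrDl mul1r; lra.
- by move=> j _; exact: measurable_itv.
- move=> i j Pi Pj [x []]; rewrite /cell /= !in_itv /= => /andP[i1 i2] /andP[j1 j2].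
  apply: val_inj => /=.
  have l1 : (i%:R * h < j.+1%:R * h) by move: i1 j2; lra.
  have l2 : (j%:R * h < i.+1%:R * h) by move: j1 i2; lra.
  rewrite ltr_pM2r // ltr_nat in l1; rewrite ltr_pM2r // ltr_nat in l2.
  by apply/eqP; rewrite eqn_leq -ltnS l1 -ltnS l2.
Qed.

End Meas.

Section Sums.
Context {R : realType}.

Lemma sum_split (F : nat -> R[i]) (p : nat -> nat) (M : nat) :
  (forall j, (p j <= p j.+1)%N) ->
  \sum_(p 0 <= x < p M) F x = \sum_(j < M) \sum_(p j <= x < p j.+1) F x.
Proof.
move=> hp.
have mono : forall j, (p 0 <= p j)%N.
  elim=> // j IH; exact: leq_trans IH (hp j).
elim: M => [|M IH]; first by rewrite big_geq // big_ord0.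
by rewrite big_ord_recr /= -IH -big_cat_nat.
Qed.

Lemma sum_tele (p : nat -> nat) (M : nat) :
  (forall j, (p j <= p j.+1)%N) ->
  \sum_(j < M) ((p j.+1 - p j)%:R : R) = (p M - p 0)%:R.
Proof.
move=> hp.
have mono : forall j, (p 0 <= p j)%N.
  elim=> // j IH; exact: leq_trans IH (hp j).
elim: M => [|M IH]; first by rewrite big_ord0 subnn.
rewrite big_ord_recr /= IH -natrD; congr (_%:R).
have := mono M; have := hp M.
move: (p M) (p M.+1) (p 0) => u w z h1 h2; lia.
Qed.

Lemma bad_bound (F : nat -> R[i]) (m n : nat) (G : R) :
  (forall x, (m <= x)%N -> (x < n)%N -> cabs (F x) <= G) ->
  cabs (\sum_(m <= x < n) F x) <= (n - m)%:R * G.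
Proof.
move=> hF; apply: le_trans (cabs_sum _ _ _ _) _.
have H : \sum_(m <= x < n) cabs (F x) <= \sum_(m <= x < n) G.
  rewrite big_nat_cond [X in _ <= X]big_nat_cond; apply: ler_sum => x /andP[/andP[h1 h2] _].
  exact: hF.
apply: le_trans H _; by rewrite sumr_const_nat mulr_natl.
Qed.

End Sums.


Section Core.
Context {R : realType}.

Lemma choose_delta (eps G K alpha delta0 : R) : 0 < eps -> 0 <= G -> 0 < alpha -> 0 < delta0 ->
  exists delta : R, [/\ 0 < delta, delta <= pi, 2 * delta < delta0 &
    G * (K * (2 * delta) `^ alpha) <= eps / 2].
Proof.
move=> e0 G0 a0 d0.
pose K1 := `|K| + 1; pose G1 := G + 1.
have K10 : 0 < K1 by rewrite /K1 ltr_pwDr.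
have G10 : 0 < G1 by rewrite /G1 ltr_pwDr.
pose T := eps / (2 * G1 * K1).
have T0 : 0 < T by rewrite /T divr_gt0 // !mulr_gt0.
pose d := Num.min (Num.min (delta0 / 4) 1) (T `^ (alpha^-1) / 2).
have Tp0 : 0 < T `^ (alpha^-1) by rewrite powR_gt0.
have dd1 : d <= delta0 / 4 by rewrite /d !ge_min lexx.
have dd2 : d <= 1 by rewrite /d !ge_min lexx orbT.
have dd3 : d <= T `^ (alpha^-1) / 2 by rewrite /d ge_min lexx orbT.
have d0' : 0 < d by rewrite /d !lt_min !divr_gt0 // ltr01.
exists d; split => //.
- apply: le_trans dd2 _; apply: le_trans _ (pi_ge2 R); lra.
- lra.
have p1 : (2 * d) `^ alpha <= T.
  have -> : T = (T `^ (alpha^-1)) `^ alpha by rewrite -powRrM mulVf ?gt_eqF // powRr1 // ltW.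
  apply: ge0_ler_powR; rewrite ?nnegrE ?(ltW a0) ?powR_ge0 //; first lra.
  lra.
have p2 : K * (2 * d) `^ alpha <= K1 * T.
  apply: le_trans (_ : `|K| * (2 * d) `^ alpha <= _).
    by rewrite ler_wpM2r ?powR_ge0 // ler_norm.
  apply: ler_pM => //; rewrite ?powR_ge0 //; rewrite /K1; lra.
have p3 : G * (K1 * T) <= G1 * (K1 * T).
  apply: ler_wpM2r; first by rewrite mulr_ge0 // ltW.
  rewrite /G1; lra.
have p4 : G1 * (K1 * T) = eps / 2.
  rewrite /T; field; by rewrite ?gt_eqF.
apply: le_trans (ler_wpM2l G0 p2) _; apply: le_trans p3 _; by rewrite p4.
Qed.

End Core.


Section Core2.
Context {R : realType}.

Lemma core (a b : R) (I J : R -> R) (g : R -> R[i]) (LJ Lg G K alpha delta0 : R) :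
  0 <= a -> a < b -> 0 <= LJ -> 0 <= Lg -> 0 <= G -> 0 < alpha -> 0 < delta0 ->
  (forall s t, s \in `[a, b] -> t \in `[a, b] -> `|J s - J t| <= LJ * `|s - t|) ->
  (forall s t, s \in `[a, b] -> t \in `[a, b] -> s < t ->
     exists2 xi, xi \in `[s, t] & I t - I s = J xi * (t - s)) ->
  (forall s t, s \in `[a, b] -> t \in `[a, b] -> cabs (g s - g t) <= Lg * `|s - t|) ->
  (forall t, t \in `[a, b] -> cabs (g t) <= G) ->
  (forall t, t \in `]a, b[ -> derive1 I t = J t) ->
  (forall delta, 0 < delta -> delta < delta0 ->
     (lebesgue_measure (near_2piZ_set a b I delta) <= (K * delta `^ alpha)%:E)%E) ->
  forall eps, 0 < eps -> \forall N \near \oo,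
    cabs (\sum_(Num.truncn (a * N%:R) + 1 <= x < Num.truncn (b * N%:R) + 1)
          expi (N%:R * I (x%:R / N%:R)) * g (x%:R / N%:R)) <= eps * N%:R.
Proof.
move=> a0 ab LJ0 Lg0 G0 al0 d00 hJ hI hg hG hD hmeas eps e0.
have [delta [dl0 dlpi dld0 dlK]] := choose_delta eps G K alpha delta0 e0 G0 al0 d00.
set kap := Num.sqrt (2 - 2 * cos delta).
have k0 : 0 < kap by apply: kappa_gt0; rewrite dl0 dlpi.
pose M := (Num.truncn (LJ * (b - a) / delta)).+1.
have MR0 : 0 < (M%:R : R) by rewrite ltr0n.
pose h := (b - a) / M%:R.
have ba0 : 0 < b - a by rewrite subr_gt0.
have h0 : 0 < h by rewrite divr_gt0.
have LJh : LJ * h <= delta.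
  have H1 : LJ * (b - a) / delta < M%:R by exact: truncnS_gt.
  rewrite ltr_pdivrMr // in H1.
  rewrite /h mulrA ler_pdivrMr // [delta * _]mulrC; exact: ltW.
pose c (j : nat) := a + j%:R * h.
have cM : c M = b.
  rewrite /c /h mulrC divfK ?gt_eqF //; ring.
have c0 : c 0%N = a by rewrite /c mul0r addr0.
have cS : forall j, c j.+1 = c j + h by move=> j; rewrite /c -nat1r mulrDl mul1r; ring.
have crange : forall j, (j <= M)%N -> a <= c j <= b.
  move=> j jM; rewrite /c; apply/andP; split.
    by rewrite lerDl mulr_ge0 // ltW.
  rewrite -lerBrDl /h mulrA ler_pdivrMr // mulrC ler_wpM2l ?ler_nat //; exact: ltW.
pose bad (j : nat) : bool := `[< exists t, c j <= t <= c j.+1 /\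
     exists k : int, `|J t - 2 * pi * k%:~R| <= delta >].
have badsub : forall j : 'I_M, bad j -> cell a h j `<=` near_2piZ_set a b I (2 * delta).
  move=> j /asboolP [t [/andP[t1 t2] [k hk]]] s; rewrite /cell /= in_itv /= => /andP[s1 s2].
  have jM : (j <= M)%N by exact: ltnW.
  have jM' : (j.+1 <= M)%N by [].
  have [ca cb] := andP (crange j jM); have [ca' cb'] := andP (crange j.+1 jM').
  have sab : s \in `]a, b[.
    rewrite in_itv /=; apply/andP; split; rewrite /c in ca cb ca' cb'; lra.
  split; first by move: sab; rewrite !in_itv /= => /andP[? ?]; apply/andP; split; apply: ltW.
  exists k; rewrite hD //.
  have sab' : s \in `[a, b] by move: sab; rewrite !in_itv /= => /andP[? ?]; apply/andP; split; apply: ltW.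
  have tab' : t \in `[a, b] by rewrite in_itv /=; apply/andP; split; lra.
  have := hJ _ _ sab' tab'.
  have e : J s - 2 * pi * k%:~R = (J s - J t) + (J t - 2 * pi * k%:~R) by ring.
  rewrite e => H; apply: le_trans (ler_normD _ _) _.
  have st : `|s - t| <= h.
    have e1 := cS j; rewrite /c in e1 t1 t2.
    rewrite ler_norml; apply/andP; split; lra.
  have : LJ * `|s - t| <= LJ * h by rewrite ler_wpM2l.
  lra.
have hsum : \sum_(j < M | bad j) h <= K * (2 * delta) `^ alpha.
  have H1 := bad_measure a h M (fun j : 'I_M => bad j) (near_2piZ_set a b I (2 * delta)) h0 badsub.
  have H2 := hmeas (2 * delta) ltac:(by rewrite mulr_gt0) dld0.
  by rewrite -lee_fin; apply: le_trans H1 H2.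
pose D0 := Lg * (2 / kap) + G * (6 * LJ) * ((2 / kap) * (2 / kap)).
pose Q0 := 2 * (G * (2 / kap)) + 2 * G.
pose B0 := D0 * (b - a + 1) + M%:R * (Q0 + G).
have kk : 0 <= 2 / kap by rewrite divr_ge0 // ltW.
have D00 : 0 <= D0.
  rewrite /D0; apply: addr_ge0; apply: mulr_ge0 => //; apply: mulr_ge0 => //; lra.
have Q00 : 0 <= Q0 by rewrite /Q0; apply: addr_ge0; apply: mulr_ge0 => //; apply: mulr_ge0.
have B00 : 0 <= B0.
  rewrite /B0; apply: addr_ge0; apply: mulr_ge0 => //; try lra; exact: ltW.
exists (Num.truncn (4 * LJ / kap + 2 * B0 / eps)).+1 => // N /= hN.
have NX : 4 * LJ / kap + 2 * B0 / eps < N%:R.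
  apply: lt_le_trans (truncnS_gt _) _; by rewrite ler_nat.
have N0 : (0 < N)%N by apply: leq_trans hN.
have NR0 : 0 < (N%:R : R) by rewrite ltr0n.
have X1 : 0 <= 4 * LJ / kap by rewrite divr_ge0 // ?mulr_ge0 // ltW.
have X2 : 0 <= 2 * B0 / eps by rewrite divr_ge0 // ?mulr_ge0 // ltW.
have hNk : 4 * LJ <= kap * N%:R.
  have : 4 * LJ / kap <= N%:R by lra.
  by rewrite ler_pdivrMr // [N%:R * _]mulrC.
have hNB : B0 <= eps / 2 * N%:R.
  have : 2 * B0 / eps <= N%:R by lra.
  rewrite ler_pdivrMr // => H; lra.
pose p (j : nat) := (Num.truncn (c j * N%:R) + 1)%N.
have pmono : forall j, (p j <= p j.+1)%N.
  move=> j; rewrite /p leq_add2r; apply: le_truncn; rewrite ler_wpM2r ?ler0n //.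
  by rewrite cS lerDl ltW.
have -> : (Num.truncn (a * N%:R) + 1)%N = p 0%N by rewrite /p c0.
have -> : (Num.truncn (b * N%:R) + 1)%N = p M by rewrite /p cM.
rewrite (sum_split _ p M pmono).
apply: le_trans (cabs_sum _ _ _ _) _.
have cnt : forall y y' : R, 0 <= y -> y <= y' ->
    ((Num.truncn y' + 1 - (Num.truncn y + 1))%N%:R : R) <= y' - y + 1.
  move=> y y' y0 yy'; rewrite subnDr natrB; last by apply: le_truncn.
  have := truncnS_gt y; have : ((Num.truncn y')%:R : R) <= y'.
    by rewrite truncn_le; apply: le_trans yy'.
  rewrite -nat1r; lra.
have cellB : forall j : 'I_M,
    cabs (\sum_(p j <= x < p j.+1) expi (N%:R * I (x%:R / N%:R)) * g (x%:R / N%:R))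
    <= (p j.+1 - p j)%:R * (D0 / N%:R) + Q0 + (if bad j then (h * N%:R + 1) * G else 0).
  move=> j; have jM := ltnW (ltn_ord j); have jM' : (j.+1 <= M)%N := ltn_ord j.
  have [ca cb] := andP (crange j jM); have [ca' cb'] := andP (crange j.+1 jM').
  have cc' : c j <= c j.+1 by rewrite cS lerDl ltW.
  have cj0 : 0 <= c j by apply: le_trans ca.
  have cnt1 : ((p j.+1 - p j)%:R : R) <= h * N%:R + 1.
    apply: le_trans (cnt _ _ _ _) _; rewrite ?mulr_ge0 ?ler_wpM2r //.
    rewrite cS mulrDl; lra.
  have cnt0 : 0 <= ((p j.+1 - p j)%:R : R) * (D0 / N%:R).
    by rewrite mulr_ge0 // divr_ge0 // ltW.
  case: (boolP (bad j)) => bj.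
    apply: le_trans (bad_bound _ _ _ _ _) _.
      move=> x h1 h2; rewrite cabsM cabs_expi mul1r; apply: hG.
      have h1' : ((Num.truncn (c j * N%:R)).+1 <= x)%N by move: h1; rewrite /p addn1.
      have h2' : (x <= Num.truncn (c j.+1 * N%:R))%N by move: h2; rewrite /p addn1 ltnS.
      have [l1 l2] := tN_range (c j) (c j.+1) N x N0 cj0 (le_trans cj0 cc') h1' h2'.
      rewrite in_itv /=; apply/andP; split; lra.
    have := ler_wpM2r G0 cnt1; lra.
  rewrite addr0.
  have hgood : forall t, c j <= t <= c j.+1 -> kap <= cabs (expi (J t) - 1).
    move=> t tr; apply: expi_far; first by rewrite dl0 dlpi.
    move=> [k hk]; move/negP: bj; apply; apply/asboolP; exists t; split => //; by exists k.
  have := good_cell a b (c j) (c j.+1) I J g LJ Lg G kap N N0 a0 ca cc' cb' k0 LJ0 Lg0 G0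
            hNk hJ hI hg hG hgood.
  by rewrite /p /D0 /Q0 addrA.
apply: le_trans; first by apply: ler_sum => j _; exact: cellB.
rewrite big_split /= big_split /=.
rewrite -mulr_suml (sum_tele p M pmono) sumr_const card_ord -big_mkcond /=.
have b1 : ((p M - p 0%N)%:R : R) <= (b - a) * N%:R + 1.
  rewrite /p c0 cM; apply: le_trans (cnt _ _ _ _) _.
  - by rewrite mulr_ge0.
  - by rewrite ler_wpM2r // ltW.
  - by rewrite mulrBl.
have T1 : ((p M - p 0%N)%:R : R) * (D0 / N%:R) <= D0 * (b - a + 1).
  apply: le_trans (ler_wpM2r _ b1) _; first by rewrite divr_ge0 // ltW.
  rewrite mulrDl mul1r.
  have e : (b - a) * N%:R * (D0 / N%:R) = D0 * (b - a) by field; rewrite gt_eqF.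
  have e2 : D0 * (b - a + 1) = D0 * (b - a) + D0 by ring.
  rewrite e e2 lerD2l ler_pdivrMr // ler_peMr //.
  by rewrite ler1n.
have b2 : \sum_(j < M | bad j) (h * N%:R + 1) * G
    <= (\sum_(j < M | bad j) h) * (N%:R * G) + M%:R * G.
  rewrite (eq_bigr (fun j => h * (N%:R * G) + G)); last by move=> j _; ring.
  rewrite big_split /= -mulr_suml lerD2l.
  apply: le_trans (_ : \sum_(j < M) G <= _); last by rewrite sumr_const card_ord mulr_natl.
  rewrite [X in _ <= X](bigID (fun j : 'I_M => bad j)) /= lerDl.
  by apply: sumr_ge0.
have T2 : (\sum_(j < M | bad j) h) * (N%:R * G) <= eps / 2 * N%:R.
  apply: le_trans (ler_wpM2r _ hsum) _; first by rewrite mulr_ge0 // ltW.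
  have e : K * (2 * delta) `^ alpha * (N%:R * G) = N%:R * (G * (K * (2 * delta) `^ alpha)) by ring.
  rewrite e [_ * N%:R]mulrC ler_wpM2l //; exact: ltW.
have eB : B0 = D0 * (b - a + 1) + M%:R * Q0 + M%:R * G by rewrite /B0; ring.
rewrite -mulr_natl.
lra.
Qed.

End Core2.


Lemma cplx_lip {R : realType} (a b : R) (g : R -> R[i]) : a <= b -> C1_on_cplx a b g ->
  exists Lg : R, 0 <= Lg /\ forall s t, s \in `[a, b] -> t \in `[a, b] ->
    cabs (g s - g t) <= Lg * `|s - t|.
Proof.
move=> ab [hr hi].
have [L1 [L10 H1]] := C1_lip a b _ ab hr.
have [L2 [L20 H2]] := C1_lip a b _ ab hi.
exists (L1 + L2); split; first by rewrite addr_ge0.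
move=> s t sab tab; apply: le_trans (cabs_ReIm _) _.
have := H1 s t sab tab; have := H2 s t sab tab.
case: (g s) => u1 v1; case: (g t) => u2 v2 /=.
rewrite mulrDl; move=> h2 h1; exact: lerD.
Qed.

Theorem proposition4p2 (R : realType) (a b d : R) (g : R -> R[i]) (I : R -> R)
    (f : nat -> R[i]) :
  0 <= a -> a < b ->
  C1_on_cplx a b g ->
  C2_on a b I ->
  (exists alpha : R, 0 < alpha /\
     exists (K : R) (delta0 : R), 0 < delta0 /\
       forall delta : R, 0 < delta -> delta < delta0 ->
         (lebesgue_measure (near_2piZ_set a b I delta)
            <= (K * delta `^ alpha)%:E)%E) ->
  (forall eps : R, 0 < eps ->
     \forall N \near \oo,
       forall t : R, t \in `[a, b] ->
         cabs (f (Num.truncn (t * N%:R))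
                - expi (N%:R * I t) * g t * ((N%:R `^ d)%:C)%C)
         <= eps * N%:R `^ d) ->
  forall eps : R, 0 < eps ->
    \forall N \near \oo,
      cabs (\sum_(Num.truncn (a * N%:R) + 1 <= x < Num.truncn (b * N%:R) + 1)
               f x)
      <= eps * N%:R `^ (d + 1).
Proof.
move=> a0 ab hgC [C1I [J [dhE C1J]]] [alpha [al0 [K [delta0 [d00 hmeas]]]]] hf eps e0.
have ab' := ltW ab.
have [Lg [Lg0 hg]] := cplx_lip a b g ab' hgC.
have [LJ [LJ0 hJ]] := C1_lip a b J ab' C1J.
have aab : a \in `[a, b] by rewrite in_itv /= lexx ab'.
pose G := cabs (g a) + Lg * (b - a).
have G0 : 0 <= G by rewrite addr_ge0 ?cabs_ge0 // mulr_ge0 // subr_ge0.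
have hG : forall t, t \in `[a, b] -> cabs (g t) <= G.
  move=> t tab; have e : g t = (g t - g a) + g a by ring.
  rewrite e; apply: le_trans (cabsD _ _) _; rewrite /G addrC lerD2l.
  apply: le_trans (hg _ _ tab aab) _; rewrite ler_wpM2l //.
  move: tab; rewrite in_itv /= => /andP[? ?]; rewrite ger0_norm ?subr_ge0 //; lra.
have [Ic [Id _]] := C1I.
have hI : forall s t, s \in `[a, b] -> t \in `[a, b] -> s < t ->
    exists2 xi, xi \in `[s, t] & I t - I s = J xi * (t - s).
  move=> s t sab tab st.
  have sub : `[s, t] `<=` `[a, b].
    move=> z /=; rewrite !in_itv /=; move: sab tab; rewrite !in_itv /=.
    move=> /andP[? ?] /andP[? ?] /andP[? ?]; apply/andP; split; lra.
  have der : forall z, z \in `]s, t[ -> is_derive z 1 I (J z).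
    move=> z zst.
    have zab : z \in `]a, b[.
      move: zst sab tab; rewrite !in_itv /= => /andP[? ?] /andP[? ?] /andP[? ?].
      apply/andP; split; lra.
    rewrite dhE // derive1E; exact: derivableP (Id _ zab).
  have [c cst ->] := MVT st der (continuous_subspaceW sub Ic).
  exists c => //; move: cst; rewrite !in_itv /= => /andP[? ?]; apply/andP; split; exact: ltW.
have hD : forall t, t \in `]a, b[ -> derive1 I t = J t by move=> t tab; rewrite dhE.
have e2 : 0 < eps / 2 by rewrite divr_gt0.
have hcore := core a b I J g LJ Lg G K alpha delta0 a0 ab LJ0 Lg0 G0 al0 d00 hJ hI hg hG hD hmeas (eps / 2) e2.
pose eta := eps / (2 * (b - a + 1)).
have eta0 : 0 < eta by rewrite divr_gt0 // mulr_gt0 //; lra.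
case: (hf eta eta0) => N1 _ H1.
case: hcore => N2 _ H2.
exists (maxn (maxn N1 N2) 1) => // N /= hN.
have hN1 : (N1 <= N)%N by apply: leq_trans hN; rewrite leq_max leq_max leqnn.
have hN2 : (N2 <= N)%N by apply: leq_trans hN; rewrite leq_max leq_max leqnn orbT.
have N0 : (0 < N)%N by apply: leq_trans hN; rewrite leq_max leqnn orbT.
have NR0 : 0 < (N%:R : R) by rewrite ltr0n.
have {}H1 := H1 N hN1; have {}H2 := H2 N hN2.
simpl in H1, H2.
have b0 : 0 <= b by lra.
set P := N%:R `^ d.
have P0 : 0 <= P by rewrite /P powR_ge0.
have -> : \sum_(Num.truncn (a * N%:R) + 1 <= x < Num.truncn (b * N%:R) + 1) f x =
   \sum_(Num.truncn (a * N%:R) + 1 <= x < Num.truncn (b * N%:R) + 1)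
      (f x - expi (N%:R * I (x%:R / N%:R)) * g (x%:R / N%:R) * (P%:C)%C)
   + (\sum_(Num.truncn (a * N%:R) + 1 <= x < Num.truncn (b * N%:R) + 1)
      expi (N%:R * I (x%:R / N%:R)) * g (x%:R / N%:R)) * (P%:C)%C.
  rewrite mulr_suml -big_split /=; apply: eq_bigr => x _; ring.
apply: le_trans (cabsD _ _) _.
have err := bad_bound (fun x => f x - expi (N%:R * I (x%:R / N%:R)) * g (x%:R / N%:R) * (P%:C)%C)
   (Num.truncn (a * N%:R) + 1) (Num.truncn (b * N%:R) + 1) (eta * P).
have {}err : cabs (\sum_(Num.truncn (a * N%:R) + 1 <= x < Num.truncn (b * N%:R) + 1)
      (f x - expi (N%:R * I (x%:R / N%:R)) * g (x%:R / N%:R) * (P%:C)%C))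
    <= ((Num.truncn (b * N%:R) + 1) - (Num.truncn (a * N%:R) + 1))%:R * (eta * P).
  apply: err => x h1 h2 /=.
  have h1' : ((Num.truncn (a * N%:R)).+1 <= x)%N by move: h1; rewrite addn1.
  have h2' : (x <= Num.truncn (b * N%:R))%N by move: h2; rewrite addn1 ltnS.
  have [l1 l2] := tN_range a b N x N0 a0 b0 h1' h2'.
  have tab : x%:R / N%:R \in `[a, b] by rewrite in_itv /=; apply/andP; split => //; exact: ltW.
  have := H1 _ tab; rewrite divfK ?gt_eqF // natrK //.
have cnt : (((Num.truncn (b * N%:R) + 1) - (Num.truncn (a * N%:R) + 1))%N%:R : R)
    <= (b - a) * N%:R + 1.
  rewrite subnDr natrB; last by apply: le_truncn; rewrite ler_wpM2r // ltW.
  have := truncnS_gt (a * N%:R); have : ((Num.truncn (b * N%:R))%:R : R) <= b * N%:R.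
    by rewrite truncn_le mulr_ge0.
  rewrite -nat1r mulrBl; lra.
have Nge1 : 1 <= (N%:R : R) by rewrite ler1n.
have A1 : (((Num.truncn (b * N%:R) + 1) - (Num.truncn (a * N%:R) + 1))%N%:R : R) * eta
    <= eps / 2 * N%:R.
  apply: le_trans (ler_wpM2r (ltW eta0) cnt) _.
  apply: le_trans (_ : (b - a + 1) * N%:R * eta <= _).
    rewrite ler_wpM2r ?(ltW eta0) //.
    have e : (b - a + 1) * N%:R = (b - a) * N%:R + N%:R by ring.
    by rewrite e lerD2l.
  have ne : b - a + 1 != 0 by apply/eqP; lra.
  have E : (b - a + 1) * N%:R * eta = eps / 2 * N%:R.
    by rewrite /eta; field; rewrite ?ne.
  by rewrite E.
have main : cabs ((\sum_(Num.truncn (a * N%:R) + 1 <= x < Num.truncn (b * N%:R) + 1)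
      expi (N%:R * I (x%:R / N%:R)) * g (x%:R / N%:R)) * (P%:C)%C) <= eps / 2 * N%:R * P.
  by rewrite cabsM cabsR ger0_norm // ler_wpM2r.
have pw : N%:R `^ (d + 1) = P * N%:R.
  rewrite powRD; last by apply/implyP => _; rewrite gt_eqF.
  by rewrite powRr1 // ler0n.
rewrite pw; apply: le_trans (lerD err main) _.
rewrite mulrA; have := ler_wpM2r P0 A1; lra.
Qed.
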